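(* Let $R$ be a commutative ring and work in the category $\mathrm{Mod}(R)$ of $R$-modules. If $\mathfrak{p}$ is a prime ideal of $R$, then $R/\mathfrak{p}$ is spectral. Every spectral object of $\mathrm{Mod}(R)$ is equivalent to $R/\mathfrak{p}$ for some prime ideal $\mathfrak{p}$. For prime ideals $\mathfrak{p},\mathfrak{q}$ we have $R/\mathfrak{p} \prec R/\mathfrak{q}$ if and only if $\mathfrak{q} \subseteq \mathfrak{p}$, and $R/\mathfrak{p} \approx R/\mathfrak{q}$ if and only if $\mathfrak{p} = \mathfrak{q}$. Hence the map $\mathrm{Spec}(R) \to \mathrm{Spec}(\mathrm{Mod}(R))$, $\mathfrak{p} \mapsto [R/\mathfrak{p}]$, is a bijection.
   Context: Let $\mathcal{A}$ be an abelian category satisfying AB5 (cocomplete with exact directed colimits). For $M,N\in\mathcal{A}$, write $M \prec N$ if $M$ is a subquotient of a direct sum of (possibly infinitely many) copies of $N$; write $M \approx N$ (''equivalent'') if $M\prec N$ and $N \prec M$. Let $[M] := \{N \in \mathcal{A} : N \prec M\}$. An object $M$ is spectral if $M \neq 0$ and $M \prec N$ for every nonzero subobject $N \subseteq M$. $\mathrm{Spec}(\mathcal{A})$ denotes the collection of all $[M]$ with $M$ spectral. *)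

(* Defs.v *)
From HB Require Import structures.
From mathcomp Require Import all_boot all_order all_algebra.
From mathcomp Require Import generic_quotient ring_quotient.
From Stdlib Require Lists.List.
Set Implicit Arguments. Unset Strict Implicit. Unset Printing Implicit Defensive.
Import GRing.Theory.
Local Open Scope ring_scope.
Local Open Scope quotient_scope.

Section QuotMod.
Variables (R : comNzRingType) (p : prime_idealr R).

Definition quotR := {ideal_quot p}.
HB.instance Definition _ := GRing.ComNzRing.on quotR.

Definition qscale (r : R) (x : quotR) : quotR := (\pi_quotR r) * x.

Lemma qscaleA a b v : qscale a (qscale b v) = qscale (a * b) v.
Proof. by rewrite /qscale rmorphM mulrA. Qed.
Lemma qscale1 : left_id 1 qscale.
Proof. by move=> v; rewrite /qscale rmorph1 mul1r. Qed.
Lemma qscaleDr : right_distributive qscale +%R.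
Proof. by move=> a u v; rewrite /qscale mulrDr. Qed.
Lemma qscaleDl v : {morph qscale^~ v : a b / a + b}.
Proof. by move=> a b; rewrite /qscale rmorphD mulrDl. Qed.

HB.instance Definition _ :=
  GRing.Zmodule_isLmodule.Build R quotR qscaleA qscale1 qscaleDr qscaleDl.

Definition RmodP : lmodType R := quotR.
End QuotMod.

Section Prec.
Variable R : comNzRingType.

Definition fin_supp (I : Type) (V : zmodType) (x : I -> V) : Prop :=
  exists s : seq I, forall i, ~ Stdlib.Lists.List.In i s -> x i = 0.

Definition submodule (V : lmodType R) (S : V -> Prop) : Prop :=
  [/\ S 0, (forall u v, S u -> S v -> S (u + v)) & (forall (r : R) u, S u -> S (r *: u))].

(* A is a submodule of the direct sum (+)_{i:I} S of copies of the submodule S of V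
   (elements of the direct sum = finitely supported families with values in S) *)
Definition dsum_submodule (V : lmodType R) (S : V -> Prop) (I : Type)
    (A : (I -> V) -> Prop) : Prop :=
  [/\ (forall x, A x -> fin_supp x /\ (forall i, S (x i))),
      A (fun _ => 0),
      (forall x y, A x -> A y -> A (fun i => x i + y i)) &
      (forall (r : R) x, A x -> A (fun i => r *: x i))].

(* M is a subquotient of a direct sum of copies of the module S (a submodule of V):
   there is a submodule A of (+)_I S and an R-linear surjection A ->> M
   (so M ≅ A / ker). *)
Definition subquot_sum (M V : lmodType R) (S : V -> Prop) : Prop :=
  exists (I : Type) (A : (I -> V) -> Prop) (f : (I -> V) -> M),
    [/\ dsum_submodule S A,
        (forall x y, A x -> A y -> f (fun i => x i + y i) = f x + f y),
        (forall (r : R) x, A x -> f (fun i => r *: x i) = r *: f x) &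
        (forall m : M, exists x, A x /\ f x = m)].

Definition prec (M N : lmodType R) : Prop := subquot_sum M (fun _ : N => True).

Definition equiv_mod (M N : lmodType R) : Prop := prec M N /\ prec N M.

Definition cls (M : lmodType R) : lmodType R -> Prop := fun N => prec N M.

Definition spectral (M : lmodType R) : Prop :=
  (exists m : M, m <> 0) /\
  (forall S : M -> Prop, submodule S -> (exists m, S m /\ m <> 0) -> subquot_sum M S).

End Prec.

(* Main.v *)
Require Import Defs.
From HB Require Import structures.
From mathcomp Require Import all_boot all_order all_algebra.
From mathcomp Require Import generic_quotient ring_quotient.
From Stdlib Require Import ClassicalEpsilon FunctionalExtensionality PropExtensionality Classical_Prop.
From Stdlib Require Lists.List.
Set Implicit Arguments. Unset Strict Implicit. Unset Printing Implicit Defensive.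
Import GRing.Theory.
Local Open Scope ring_scope.
Local Open Scope quotient_scope.

Section Gen.
Variable R : comNzRingType.

Lemma fs0 (I : Type) (V : zmodType) : fin_supp (fun _ : I => (0 : V)).
Proof. by exists [::]. Qed.

Lemma fsD (I : Type) (V : zmodType) (x y : I -> V) :
  fin_supp x -> fin_supp y -> fin_supp (fun i => x i + y i).
Proof.
move=> [s1 h1] [s2 h2]; exists (s1 ++ s2) => i hi.
rewrite h1 ?h2 ?addr0 // => hh; apply: hi; apply: List.in_or_app; tauto.
Qed.

Lemma fsZ (I : Type) (V : lmodType R) (r : R) (x : I -> V) :
  fin_supp x -> fin_supp (fun i => r *: x i).
Proof. by move=> [s h]; exists s => i hi; rewrite h ?scaler0. Qed.

Lemma fsC (I : Type) (V W : zmodType) (phi : W -> V) (y : I -> W) :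
  phi 0 = 0 -> fin_supp y -> fin_supp (fun i => phi (y i)).
Proof. by move=> h0 [s h]; exists s => i hi; rewrite h. Qed.

Lemma fsCinv (I : Type) (V W : zmodType) (phi : W -> V) (y : I -> W) :
  phi 0 = 0 -> injective phi -> fin_supp (fun i => phi (y i)) -> fin_supp y.
Proof. by move=> h0 hi [s h]; exists s => i hs; apply: hi; rewrite h0 h. Qed.

Lemma add0_of (V W : zmodType) (phi : W -> V) :
  (forall a b, phi (a + b) = phi a + phi b) -> phi 0 = 0.
Proof. by move=> h; apply: (addrI (phi 0)); rewrite addr0 -h addr0. Qed.

Lemma sq_f0 (M V : lmodType R) (I : Type) (A : (I -> V) -> Prop) (f : (I -> V) -> M) :
  A (fun _ => 0) -> (forall x y, A x -> A y -> f (fun i => x i + y i) = f x + f y) ->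
  f (fun _ => 0) = 0.
Proof.
move=> A0 hf; have := hf _ _ A0 A0.
have -> : (fun _ : I => (0 : V) + 0) = (fun _ => 0) by apply: functional_extensionality => i; rewrite addr0.
by move=> e; apply: (addrI (f (fun _ => 0))); rewrite addr0 -e.
Qed.

Lemma sq_kill (M V : lmodType R) (S : V -> Prop) (r : R) :
  subquot_sum M S -> (forall v, S v -> r *: v = 0) -> forall m : M, r *: m = 0.
Proof.
move=> [I [A [f [[hA A0 AD AZ] fD fZ fS]]]] hr m.
have [x [Ax <-]] := fS m.
rewrite -fZ //.
have -> : (fun i => r *: x i) = (fun _ => 0).
  by apply: functional_extensionality => i; apply: hr; exact: (proj2 (hA _ Ax)).
exact: sq_f0 A0 fD.
Qed.

Lemma sq_refl (M : lmodType R) : subquot_sum M (fun _ : M => True).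
Proof.
exists unit, (fun _ => True), (fun x => x tt); split => //.
- by split => // x _; split => //; exists [:: tt] => -[] []; left.
- by move=> m; exists (fun _ => m).
Qed.

Lemma sq_quot (M M' V : lmodType R) (S : V -> Prop) (h : M -> M') :
  subquot_sum M S -> (forall a b, h (a + b) = h a + h b) ->
  (forall (r : R) a, h (r *: a) = r *: h a) -> (forall b, exists a, h a = b) ->
  subquot_sum M' S.
Proof.
move=> [I [A [f [hA fD fZ fS]]]] hD hZ hS.
exists I, A, (fun x => h (f x)); split => //.
- by move=> x y Ax Ay; rewrite fD // hD.
- by move=> r x Ax; rewrite fZ // hZ.
- move=> b; have [a <-] := hS b; have [x [Ax <-]] := fS a; by exists x.
Qed.

Lemma sq_push (M V W : lmodType R) (S : V -> Prop) (T : W -> Prop) (phi : W -> V) :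
  subquot_sum M T -> (forall a b, phi (a + b) = phi a + phi b) ->
  (forall (r : R) a, phi (r *: a) = r *: phi a) -> injective phi ->
  (forall w, T w -> S (phi w)) -> subquot_sum M S.
Proof.
move=> [I [A [f [[hA A0 AD AZ] fD fZ fS]]]] hD hZ hinj hTS.
have phi0 := add0_of hD.
pose psi (v : V) := epsilon (inhabits (0 : W)) (fun w => phi w = v).
have psiK1 : forall w, psi (phi w) = w.
  move=> w; apply: hinj.
  by apply: (epsilon_spec (inhabits (0 : W)) (fun w' => phi w' = phi w)); exists w.
have psiK : forall y : I -> W, (fun i => psi (phi (y i))) = y.
  by move=> y; apply: functional_extensionality => i; rewrite psiK1.
exists I, (fun x => exists y, A y /\ x = (fun i => phi (y i))), (fun x => f (fun i => psi (x i))).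
split.
- split.
  + move=> x [y [Ay ->]]; split; first exact: fsC (proj1 (hA _ Ay)).
    by move=> i; apply: hTS; exact: (proj2 (hA _ Ay)).
  + exists (fun _ => 0); split => //; apply: functional_extensionality => i; by rewrite phi0.
  + move=> x1 x2 [y1 [A1 ->]] [y2 [A2 ->]]; exists (fun i => y1 i + y2 i); split; first exact: AD.
    by apply: functional_extensionality => i; rewrite hD.
  + move=> r x [y [Ay ->]]; exists (fun i => r *: y i); split; first exact: AZ.
    by apply: functional_extensionality => i; rewrite hZ.
- move=> x1 x2 [y1 [A1 ->]] [y2 [A2 ->]].
  have -> : (fun i => psi (phi (y1 i) + phi (y2 i))) = (fun i => y1 i + y2 i).
    by apply: functional_extensionality => i; rewrite -hD psiK1.
  by rewrite !psiK fD.
- move=> r x [y [Ay ->]].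
  have -> : (fun i => psi (r *: phi (y i))) = (fun i => r *: y i).
    by apply: functional_extensionality => i; rewrite -hZ psiK1.
  by rewrite !psiK fZ.
- move=> m; have [y [Ay <-]] := fS m.
  exists (fun i => phi (y i)); split; first by exists y.
  by rewrite psiK.
Qed.

Lemma sq_pull (M V W : lmodType R) (S : V -> Prop) (T : W -> Prop) (phi : W -> V) :
  subquot_sum M S -> (forall a b, phi (a + b) = phi a + phi b) ->
  (forall (r : R) a, phi (r *: a) = r *: phi a) -> injective phi ->
  (forall v, S v -> exists w, T w /\ phi w = v) -> subquot_sum M T.
Proof.
move=> [I [A [f [[hA A0 AD AZ] fD fZ fS]]]] hD hZ hinj hST.
have phi0 := add0_of hD.
pose psi (v : V) := epsilon (inhabits (0 : W)) (fun w => phi w = v).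
exists I, (fun y => A (fun i => phi (y i))), (fun y => f (fun i => phi (y i))).
split.
- split.
  + move=> y Ay; have [fs hS] := hA _ Ay; split; first exact: fsCinv fs.
    by move=> i; have [w [Tw e]] := hST _ (hS i); rewrite -(hinj _ _ e).
  + by have -> : (fun _ : I => phi 0) = (fun _ => 0) by apply: functional_extensionality.
  + move=> x y Ax Ay.
    have -> : (fun i => phi (x i + y i)) = (fun i => phi (x i) + phi (y i)).
      by apply: functional_extensionality => i; rewrite hD.
    exact: AD.
  + move=> r x Ax.
    have -> : (fun i => phi (r *: x i)) = (fun i => r *: phi (x i)).
      by apply: functional_extensionality => i; rewrite hZ.
    exact: AZ.
- move=> x y Ax Ay.
  have -> : (fun i => phi (x i + y i)) = (fun i => phi (x i) + phi (y i)).
    by apply: functional_extensionality => i; rewrite hD.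
  exact: fD.
- move=> r x Ax.
  have -> : (fun i => phi (r *: x i)) = (fun i => r *: phi (x i)).
    by apply: functional_extensionality => i; rewrite hZ.
  exact: fZ.
- move=> m; have [x [Ax <-]] := fS m.
  have e : (fun i => phi (psi (x i))) = x.
    apply: functional_extensionality => i.
    apply: (epsilon_spec (inhabits (0 : W)) (fun w => phi w = x i)).
    by have [w [_ e]] := hST _ (proj2 (hA _ Ax) i); exists w.
  by exists (fun i => psi (x i)); rewrite e.
Qed.

Lemma sq_trans (N M P : lmodType R) (S : P -> Prop) :
  subquot_sum N (fun _ : M => True) -> subquot_sum M S -> subquot_sum N S.
Proof.
move=> [I [A [f [[hA A0 AD AZ] fD fZ fS]]]] [J [B [g [[hB B0 BD BZ] gD gZ gS]]]].
have g0 := sq_f0 B0 gD.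
exists (I * J)%type,
  (fun z => [/\ fin_supp z, (forall i, B (fun j => z (i, j))) & A (fun i => g (fun j => z (i, j)))]),
  (fun z => f (fun i => g (fun j => z (i, j)))).
split.
- split.
  + move=> z [fz Bz Az]; split => // -[i j]; exact: (proj2 (hB _ (Bz i)) j).
  + split => //; first exact: fs0.
    by have -> : (fun _ : I => g (fun _ : J => 0)) = (fun _ => 0) by apply: functional_extensionality.
  + move=> x y [fx Bx Ax] [fy By Ay]; split; first exact: fsD.
    * by move=> i; apply: BD.
    * have -> : (fun i => g (fun j => x (i, j) + y (i, j))) =
                (fun i => g (fun j => x (i, j)) + g (fun j => y (i, j))).
        by apply: functional_extensionality => i; apply: gD.
      exact: AD.
  + move=> r x [fx Bx Ax]; split; first exact: fsZ.
    * by move=> i; apply: BZ.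
    * have -> : (fun i => g (fun j => r *: x (i, j))) = (fun i => r *: g (fun j => x (i, j))).
        by apply: functional_extensionality => i; apply: gZ.
      exact: AZ.
- move=> x y [fx Bx Ax] [fy By Ay].
  have -> : (fun i => g (fun j => x (i, j) + y (i, j))) =
            (fun i => g (fun j => x (i, j)) + g (fun j => y (i, j))).
    by apply: functional_extensionality => i; apply: gD.
  exact: fD.
- move=> r x [fx Bx Ax].
  have -> : (fun i => g (fun j => r *: x (i, j))) = (fun i => r *: g (fun j => x (i, j))).
    by apply: functional_extensionality => i; apply: gZ.
  exact: fZ.
- move=> n; have [x [Ax <-]] := fS n.
  have [sx hsx] := proj1 (hA _ Ax).
  have hy : forall i, exists y, [/\ B y, g y = x i & (x i = 0 -> y = fun _ => 0)].
    move=> i; case: (classic (x i = 0)) => h.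
      by exists (fun _ => 0); split => //; rewrite h.
    by have [y [By e]] := gS (x i); exists y; split.
  pose Y i := proj1_sig (constructive_indefinite_description _ (hy i)).
  have hY : forall i, [/\ B (Y i), g (Y i) = x i & (x i = 0 -> Y i = fun _ => 0)].
    by move=> i; exact: (proj2_sig (constructive_indefinite_description _ (hy i))).
  have hl : forall i, exists l : seq J, forall j, ~ List.In j l -> Y i j = 0.
    by move=> i; have [BY _ _] := hY i; exact: (proj1 (hB _ BY)).
  pose L i := proj1_sig (constructive_indefinite_description _ (hl i)).
  have hL : forall i j, ~ List.In j (L i) -> Y i j = 0.
    by move=> i; exact: (proj2_sig (constructive_indefinite_description _ (hl i))).
  have ex : (fun i => g (fun j => Y i j)) = x.
    by apply: functional_extensionality => i; have [_ e _] := hY i.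
  exists (fun z => Y z.1 z.2); split; last by rewrite /= ex.
  split => //=; last by rewrite ex.
  + exists (List.flat_map (fun i => List.map (fun j => (i, j)) (L i)) sx) => -[i j] /= hin.
    case: (classic (List.In i sx)) => hi.
      apply: hL => hj; apply: hin; apply/List.in_flat_map; exists i; split => //.
      by apply: List.in_map.
    by have [_ _ ->] := hY i; rewrite ?hsx.
  + by move=> i; have [] := hY i.
Qed.

End Gen.

Definition mkPrime (R : comNzRingType) (S : R -> bool) (h1 : idealr_closed S) (h2 : prime_idealr_closed S) : prime_idealr R :=
  HB.pack S (isIdealr.Build R S h1) (isPrimeIdealrClosed.Build R S h2).

Lemma mkPrimeE (R : comNzRingType) (S : R -> bool) h1 h2 x : (x \in @mkPrime R S h1 h2) = S x.
Proof. by []. Qed.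

Section Q.
Variables (R : comNzRingType).
Lemma pi0E (p : prime_idealr R) (x : R) : (\pi_(quotR p) x == 0) = (x \in p).
Proof. by rewrite -(rmorph0 (\pi_(quotR p))) -(@Quotient.idealrBE _ p) subr0. Qed.
Lemma scaleE (p : prime_idealr R) (r : R) (x : RmodP p) : r *: x = (\pi_(quotR p) r : quotR p) * x.
Proof. by []. Qed.
Lemma dom (p : prime_idealr R) (x y : quotR p) : x * y = 0 -> x = 0 \/ y = 0.
Proof. by move/Quotient.rquot_IdomainAxiom/orP => [] /eqP; tauto. Qed.

Lemma trans_pi (p q : prime_idealr R) a b : {subset q <= p} ->
  \pi_(quotR q) a = \pi_(quotR q) b :> quotR q -> \pi_(quotR p) a = \pi_(quotR p) b :> quotR p.
Proof.
move=> sub e.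
have : a - b \in q by rewrite (@Quotient.idealrBE _ q); apply/eqP.
by move/sub; rewrite (@Quotient.idealrBE _ p) => /eqP.
Qed.

Lemma piK (p : prime_idealr R) (x : quotR p) : \pi_(quotR p) (repr x) = x.
Proof. exact: reprK. Qed.
Lemma piDr (p : prime_idealr R) (x y : quotR p) : \pi_(quotR p) (repr x + repr y) = x + y.
Proof. by rewrite rmorphD; congr (_ + _); apply: reprK. Qed.
Lemma piMr (p : prime_idealr R) r (x : quotR p) : \pi_(quotR p) (r * repr x) = \pi_(quotR p) r * x.
Proof. by rewrite rmorphM; congr (_ * _); apply: reprK. Qed.

Lemma part1 (p : prime_idealr R) : spectral (RmodP p).
Proof.
split; first by exists (1 : quotR p); apply/eqP; exact: oner_neq0.
move=> S [S0 SD SZ] [s [Ss s0]].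
apply: (@sq_push _ _ _ (RmodP p) S (fun _ => True) (fun c : RmodP p => (c : quotR p) * s)).
- exact: sq_refl.
- by move=> a b; rewrite mulrDl.
- by move=> r a; rewrite !scaleE mulrA.
- move=> a b e; apply/eqP; rewrite -subr_eq0; apply/eqP.
  have : ((a : quotR p) - b) * s = 0 by rewrite mulrBl e subrr.
  by case/dom.
- move=> w _; rewrite -[w]reprK -scaleE; exact: SZ.
Qed.

Lemma part3 (p q : prime_idealr R) : prec (RmodP p) (RmodP q) <-> {subset q <= p}.
Proof.
split.
- move=> h r rq.
  have : r *: (1 : RmodP p) = 0.
    apply: (@sq_kill _ _ _ _ r h) => v _; rewrite scaleE.
    have /eqP -> : \pi_(quotR q) r == 0 by rewrite pi0E.
    by rewrite mul0r.
  by rewrite scaleE mulr1 => /eqP; rewrite pi0E.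
- move=> sub.
  apply: (@sq_quot _ (RmodP q) (RmodP p) _ _ (fun x : RmodP q => \pi_(quotR p) (repr (x : quotR q)))).
  + exact: sq_refl.
  + move=> a b.
    transitivity (\pi_(quotR p) (repr (a : quotR q) + repr (b : quotR q))); last exact: rmorphD.
    apply: (trans_pi (q:=q)) => //.
    exact: (etrans (piK _) (esym (piDr _ _))).
  + move=> r a; rewrite scaleE.
    transitivity (\pi_(quotR p) (r * repr (a : quotR q))); last exact: rmorphM.
    apply: (trans_pi (q:=q)) => //.
    exact: (etrans (piK _) (esym (piMr _ _))).
  + move=> b; exists (\pi_(quotR q) (repr (b : quotR p))); rewrite -[in RHS](reprK b).
    by apply: (trans_pi (q:=q)) => //; rewrite reprK.
Qed.
End Q.

Section P2.
Variable R : comNzRingType.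

Lemma cyc_sub (M : lmodType R) (v : M) : submodule (fun u => exists a : R, u = a *: v).
Proof.
split.
- by exists 0; rewrite scale0r.
- by move=> u w [a ->] [b ->]; exists (a + b); rewrite scalerDl.
- by move=> r u [a ->]; exists (r * a); rewrite scalerA.
Qed.

Lemma part2 (M : lmodType R) : spectral M -> exists p : prime_idealr R, equiv_mod M (RmodP p).
Proof.
move=> [[m hm] hS].
have K : forall v : M, v <> 0 -> forall r : R, r *: v = 0 -> forall w : M, r *: w = 0.
  move=> v v0 r rv w.
  have h := hS _ (cyc_sub v) (ex_intro _ v (conj (ex_intro _ 1 (esym (scale1r v))) v0)).
  apply: (sq_kill h) => u [a ->].
  by rewrite scalerA mulrC -scalerA rv scaler0.
pose S := fun r : R => r *: m == 0.
have h1 : idealr_closed S.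
  split.
  - by rewrite unfold_in /S scale0r.
  - by rewrite unfold_in /S scale1r; apply/eqP.
  - move=> a u v; rewrite !unfold_in /S => /eqP hu /eqP hv.
    by rewrite scalerDl -scalerA hu hv scaler0 addr0.
have h2 : prime_idealr_closed S.
  move=> u v; rewrite !unfold_in /S => /eqP huv.
  case: (eqVneq (u *: m) 0) => hu; first by [].
  rewrite /=; apply/eqP; apply: (K _ (elimN eqP hu)).
  by rewrite scalerA mulrC.
pose p := mkPrime h1 h2.
have memp : forall r, (r \in p) = (r *: m == 0) by [].
have key : forall a b : R, \pi_(quotR p) a = \pi_(quotR p) b :> quotR p -> a *: m = b *: m.
  move=> a b e; apply/eqP; rewrite -subr_eq0 -scalerBl -memp.
  by rewrite (@Quotient.idealrBE _ p); apply/eqP.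
pose phi := fun c : RmodP p => repr (c : quotR p) *: m.
have phiD : forall a b, phi (a + b) = phi a + phi b.
  move=> a b; rewrite /phi -scalerDl; apply: key.
  exact: (etrans (piK _) (esym (piDr _ _))).
have phiZ : forall (r : R) a, phi (r *: a) = r *: phi a.
  move=> r a; rewrite /phi scalerA; apply: key; rewrite scaleE.
  exact: (etrans (piK _) (esym (piMr _ _))).
have phiI : injective phi.
  move=> a b; rewrite /phi => /eqP; rewrite -subr_eq0 -scalerBl -memp -pi0E.
  rewrite rmorphB => /eqP e; apply/eqP; rewrite -subr_eq0.
  by rewrite -(piK a) -(piK b) e.
have phipi : forall a : R, phi (\pi_(quotR p) a) = a *: m.
  by move=> a; apply: key; exact: piK.
exists p; split.
- apply: (@sq_pull _ _ _ (RmodP p) (fun u => exists a : R, u = a *: m) (fun _ => True) phi) => //.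
  + by apply: hS; [exact: cyc_sub | exists m; split => //; exists 1; rewrite scale1r].
  + by move=> v [a ->]; exists (\pi_(quotR p) a); split => //; rewrite phipi.
- apply: (@sq_push _ _ _ (RmodP p) (fun _ => True) (fun _ => True) phi) => //.
  exact: sq_refl.
Qed.
End P2.

Theorem proposition2p5 (R : comNzRingType) :
  (* R/p is spectral for every prime ideal p *)
  (forall p : prime_idealr R, spectral (RmodP p)) /\
  (* every spectral object is equivalent to some R/p *)
  (forall M : lmodType R, spectral M -> exists p : prime_idealr R, equiv_mod M (RmodP p)) /\
  (* R/p ≺ R/q  iff  q ⊆ p *)
  (forall p q : prime_idealr R, prec (RmodP p) (RmodP q) <-> {subset q <= p}) /\
  (* R/p ≈ R/q  iff  p = q *)
  (forall p q : prime_idealr R, equiv_mod (RmodP p) (RmodP q) <-> p =i q) /\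
  (* Spec(R) -> Spec(Mod R), p |-> [R/p], is a bijection *)
  ((forall p q : prime_idealr R, cls (RmodP p) = cls (RmodP q) -> p =i q) /\
   (forall M : lmodType R, spectral M -> exists p : prime_idealr R, cls M = cls (RmodP p))).
Proof.
have P4 : forall p q : prime_idealr R, equiv_mod (RmodP p) (RmodP q) <-> p =i q.
  move=> p q; split.
  - move=> [/part3 h1 /part3 h2] x; apply/idP/idP; [exact: h2 | exact: h1].
  - move=> e; split; apply/part3 => x; by rewrite e.
split; first exact: part1.
split; first exact: part2.
split; first exact: part3.
split; first exact: P4.
split.
- move=> p q e; apply/P4; split.
  + have : cls (RmodP p) (RmodP p) by exact: sq_refl.
    by rewrite e.
  + have : cls (RmodP q) (RmodP q) by exact: sq_refl.
    by rewrite -e.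
- move=> M sM; have [p [h1 h2]] := part2 sM; exists p.
  apply: functional_extensionality => N; apply: propositional_extensionality.
  split => h; [exact: sq_trans h h1 | exact: sq_trans h h2].
Qed.
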